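(* Let $q$ be odd, $n\ge2$, $G=\mathbf{SL}_n(q)$, and let $u\in G$ be unipotent of type $(\lambda_1,\dots,\lambda_k)$ with $\lambda_1>2$. Then the conjugacy class $\mathcal{O}_u$ of $u$ in $G$ is of type D.
   Context: Unipotent type $(\lambda_1\ge\dots\ge\lambda_k)$ = sizes of Jordan blocks. Conjugacy classes are racks with $x\triangleright y=xyx^{-1}$. A subrack $Y$ is decomposable if $Y=R\sqcup S$ with nonempty subracks $R,S$, $Y\triangleright R=R$, $Y\triangleright S=S$. Type D: a decomposable subrack $R\sqcup S$ with $r\in R,s\in S$ and $r\triangleright(s\triangleright(r\triangleright s))\neq s$. *)

(* Defs.v *)
From HB Require Import structures.
From mathcomp Require Import all_boot all_algebra.
Set Implicit Arguments. Unset Strict Implicit. Unset Printing Implicit Defensive.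
Import GRing.Theory.
Local Open Scope ring_scope.

Section Defs.
Variables (F : finFieldType) (n : nat).
Implicit Types (x y u g : 'M[F]_n) (X Y R S : {set 'M[F]_n}).

Definition SLn : {set 'M[F]_n} := [set A : 'M[F]_n | \det A == 1].

Definition unipotent u : bool := (u - 1%:M) ^+ n == 0.

(* lambda_1 = size of the largest Jordan block of u = nilpotency index of
   u - 1 (least k with (u - 1)^k = 0); for unipotent u this is <= n. *)
Definition lambda1 u : nat :=
  find (fun k => (u - 1%:M) ^+ k == 0) (iota 0 n.+1).

Definition conj_class u : {set 'M[F]_n} :=
  [set g *m u *m invmx g | g in SLn].

Definition rop x y : 'M[F]_n := x *m y *m invmx x.

Definition ract Y R : {set 'M[F]_n} := [set rop y r | y in Y, r in R].

Definition subrack X Y : Prop :=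
  Y \subset X /\ {in Y &, forall y z, rop y z \in Y}.

Definition decomposition X Y R S : Prop :=
  subrack X Y /\ subrack X R /\ subrack X S /\
  R != set0 /\ S != set0 /\
  R :|: S = Y /\ [disjoint R & S] /\
  ract Y R = R /\ ract Y S = S.

Definition type_D X : Prop :=
  exists Y R S, decomposition X Y R S /\
    exists2 r, r \in R & exists2 s, s \in S &
      rop r (rop s (rop r s)) != s.

End Defs.

(* Main.v *)
Require Import Defs.
From HB Require Import structures.
From mathcomp Require Import all_boot all_algebra.
From mathcomp Require Import ring.
Set Implicit Arguments. Unset Strict Implicit. Unset Printing Implicit Defensive.
Import GRing.Theory.
Local Open Scope ring_scope.

Lemma invmxM' (F : fieldType) n (A B : 'M[F]_n) :
  A \in unitmx -> B \in unitmx -> invmx (A *m B) = invmx B *m invmx A.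
Proof.
move=> uA uB.
have uAB : A *m B \in unitmx by rewrite unitmx_mul uA uB.
have h : (A *m B) *m (invmx B *m invmx A) = 1%:M.
  by rewrite mulmxA -(mulmxA A) mulmxV // mulmx1 mulmxV.
by rewrite -[RHS](mulKmx uAB) h mulmx1.
Qed.

Lemma rk1_apply (F : fieldType) m n (x : 'M[F]_(m, n)) (c : 'cV[F]_n) (d : 'rV[F]_n) :
  x *m (c *m d) = x *m c *m d.
Proof. by rewrite mulmxA. Qed.

Lemma rv_rk1 (F : fieldType) n (x : 'rV[F]_n) (c : 'cV[F]_n) (d : 'rV[F]_n) :
  x *m (c *m d) = (x *m c) 0 0 *: d.
Proof. by rewrite mulmxA {1}[x *m c]mx11_scalar mul_scalar_mx. Qed.

Lemma det_rank1 (F : fieldType) n (c : 'cV[F]_n) (d : 'rV[F]_n) :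
  \det (1%:M + c *m d) = 1 + (d *m c) 0 0.
Proof.
have e1 : block_mx (1%:M : 'M_1) 0 c 1%:M *m block_mx 1%:M (- d) 0 (1%:M + c *m d)
        = block_mx 1%:M (- d) c 1%:M.
  rewrite mulmx_block !mulmx0 !mul0mx !mulmx1 !mul1mx ?addr0 ?add0r.
  by rewrite mulmxN addrCA addNr addr0.
have e2 : block_mx (1%:M + d *m c) (- d) 0 (1%:M : 'M_n) *m block_mx 1%:M 0 c 1%:M
        = block_mx 1%:M (- d) c 1%:M.
  rewrite mulmx_block !mulmx0 !mul0mx !mulmx1 !mul1mx ?addr0 ?add0r.
  by rewrite mulNmx addrK.
have := congr1 determinant (etrans e1 (esym e2)).
rewrite !det_mulmx !det_lblock !det_ublock !det1 !mul1r !mulr1.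
by move=> ->; rewrite det_mx11 !mxE.
Qed.

Lemma comm_expand (F : fieldType) n (z x : 'M[F]_n) :
  z *m x - x *m z = (z - 1%:M) *m (x - 1%:M) - (x - 1%:M) *m (z - 1%:M).
Proof.
rewrite !mulmxBl !mulmxBr !mulmx1 !mul1mx.
move: (z *m x) (x *m z) => P Q.
apply/matrixP => i j; rewrite !mxE; ring.
Qed.

Section Frame.
End Frame.

Definition Kp (F : fieldType) n (A B x : 'M[F]_n) : bool :=
  [&& (x - 1%:M <= A)%MS, (A *m (x - 1%:M) <= B)%MS & (B *m x <= B)%MS].
Definition pres (F : fieldType) n (A B z : 'M[F]_n) : bool :=
  (A *m z <= A)%MS && (B *m z <= B)%MS.
Definition Kset (F : finFieldType) n (A B : 'M[F]_n) : {set 'M[F]_n} :=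
  [set x | [&& x \in unitmx, Kp A B x & Kp A B (invmx x)]].
Definition rel (F : fieldType) n (B x y : 'M[F]_n) : bool := (x - y <= B)%MS.

Lemma subMr (F : fieldType) m1 m2 m3 n p (X : 'M[F]_(m1, n)) (Y : 'M[F]_(m2, n))
   (Z : 'M[F]_(m3, p)) (M : 'M[F]_(n, p)) :
  (X <= Y)%MS -> (Y *m M <= Z)%MS -> (X *m M <= Z)%MS.
Proof. by move=> h1 h2; apply: submx_trans (submxMr M h1) h2. Qed.

Lemma Kp_pres (F : fieldType) n (A B x : 'M[F]_n) :
  (B <= A)%MS -> Kp A B x -> pres A B x.
Proof.
move=> BA /and3P[h1 h2 h3]; rewrite /pres h3 andbT.
have -> : A *m x = A *m (x - 1%:M) + A by rewrite mulmxBr mulmx1 subrK.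
by rewrite addmx_sub // (submx_trans h2 BA).
Qed.

Lemma conj_sub1 (F : fieldType) n (z x : 'M[F]_n) : z \in unitmx ->
  z *m x *m invmx z - 1%:M = z *m (x - 1%:M) *m invmx z.
Proof. by move=> uz; rewrite mulmxBr mulmxBl mulmx1 mulmxV. Qed.

Lemma Kp_conj (F : fieldType) n (A B z x : 'M[F]_n) :
  z \in unitmx -> pres A B z -> pres A B (invmx z) -> Kp A B x ->
  Kp A B (z *m x *m invmx z).
Proof.
move=> uz /andP[Az Bz] /andP[Azi Bzi] /and3P[h1 h2 h3].
rewrite /Kp conj_sub1 //; apply/and3P; split.
- rewrite -mulmxA; apply: submx_trans (submxMl _ _) _.
  exact: subMr h1 Azi.
- rewrite !mulmxA; apply: subMr Bzi.
  exact: subMr Az h2.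
- rewrite !mulmxA; apply: subMr Bzi.
  exact: subMr Bz h3.
Qed.

Lemma K_conj (F : finFieldType) n (A B z x : 'M[F]_n) :
  z \in unitmx -> pres A B z -> pres A B (invmx z) -> x \in Kset A B ->
  z *m x *m invmx z \in Kset A B.
Proof.
move=> uz pz pzi; rewrite !inE => /and3P[ux kx kxi].
have uzx : z *m x \in unitmx by rewrite unitmx_mul uz ux.
rewrite unitmx_mul uzx unitmx_inv uz Kp_conj //=.
by rewrite invmxM' ?unitmx_inv // invmxM' // invmxK mulmxA Kp_conj.
Qed.

Lemma rel_conj (F : fieldType) n (A B z x : 'M[F]_n) :
  z \in unitmx -> Kp A B z -> pres A B (invmx z) -> Kp A B x ->
  rel B (z *m x *m invmx z) x.
Proof.
move=> uz /and3P[z1 z2 z3] /andP[Azi Bzi] /and3P[h1 h2 h3].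
rewrite /rel.
have -> : z *m x *m invmx z - x = (z *m x - x *m z) *m invmx z.
  by rewrite mulmxBl -(mulmxA x) mulmxV // mulmx1.
apply: subMr Bzi.
rewrite comm_expand; apply: addmx_sub; first exact: subMr z1 h2.
rewrite -scaleN1r; apply: scalemx_sub; exact: subMr h1 z2.
Qed.

Lemma rel_refl (F : fieldType) n (B x : 'M[F]_n) : rel B x x.
Proof. by rewrite /rel subrr sub0mx. Qed.

Lemma rel_sym (F : fieldType) n (B x y : 'M[F]_n) : rel B x y -> rel B y x.
Proof. by rewrite /rel => h; rewrite -opprB -scaleN1r; apply: scalemx_sub. Qed.

Lemma rel_trans (F : fieldType) n (B x y z : 'M[F]_n) :
  rel B x y -> rel B y z -> rel B x z.
Proof.
rewrite /rel => h1 h2; have -> : x - z = (x - y) + (y - z) by rewrite addrA subrK.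
exact: addmx_sub.
Qed.

Lemma SL_unit (F : finFieldType) n (x : 'M[F]_n) : x \in SLn F n -> x \in unitmx.
Proof. by rewrite inE unitmxE => /eqP ->; rewrite unitr1. Qed.

Lemma SL_inv (F : finFieldType) n (x : 'M[F]_n) : x \in SLn F n -> invmx x \in SLn F n.
Proof. by rewrite !inE det_inv => /eqP ->; rewrite invr1. Qed.

Lemma SL_mul (F : finFieldType) n (x y : 'M[F]_n) :
  x \in SLn F n -> y \in SLn F n -> x *m y \in SLn F n.
Proof. by rewrite !inE det_mulmx => /eqP -> /eqP ->; rewrite mulr1. Qed.

Lemma O_SL (F : finFieldType) n (u x : 'M[F]_n) :
  u \in SLn F n -> x \in conj_class u -> x \in SLn F n.
Proof.
by move=> hu /imsetP[g hg ->]; rewrite !SL_mul ?SL_inv.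
Qed.

Lemma O_conj (F : finFieldType) n (u z x : 'M[F]_n) :
  z \in SLn F n -> x \in conj_class u -> z *m x *m invmx z \in conj_class u.
Proof.
move=> hz /imsetP[g hg ->]; apply/imsetP; exists (z *m g); first exact: SL_mul.
by rewrite invmxM' ?SL_unit // !mulmxA.
Qed.

Lemma u_in_O (F : finFieldType) n (u : 'M[F]_n) : u \in conj_class u.
Proof.
apply/imsetP; exists 1%:M; first by rewrite inE det1.
by rewrite mul1mx invmx1 mulmx1.
Qed.

Definition Cl (F : finFieldType) n (A B u w : 'M[F]_n) : {set 'M[F]_n} :=
  [set x in conj_class u | (x \in Kset A B) && rel B x w].

Lemma Cl_conj (F : finFieldType) n (A B u w z x : 'M[F]_n) :
  (B <= A)%MS -> z \in SLn F n -> z \in Kset A B -> x \in Cl A B u w ->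
  z *m x *m invmx z \in Cl A B u w.
Proof.
move=> BA hz hzK; have := hzK; rewrite inE => /and3P[uz kz kzi].
move=> hx; move: (hx); rewrite /Cl in_set => /and3P[xO xK rxw].
have pz := Kp_pres BA kz; have pzi := Kp_pres BA kzi.
rewrite /Cl in_set O_conj //= K_conj //=.
apply: rel_trans rxw; apply: (rel_conj (A:=A)) => //.
by move: xK; rewrite inE => /and3P[].
Qed.

Lemma K_inv (F : finFieldType) n (A B x : 'M[F]_n) :
  x \in Kset A B -> invmx x \in Kset A B.
Proof. by rewrite !inE unitmx_inv invmxK => /and3P[-> -> ->]. Qed.

Lemma typeD_crit (F : finFieldType) n (A B u s : 'M[F]_n) :
  (B <= A)%MS -> u \in SLn F n -> u \in Kset A B ->
  s \in conj_class u -> s \in Kset A B -> ~~ rel B s u ->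
  rop u (rop s (rop u s)) != s -> type_D (conj_class u).
Proof.
move=> BA hu uK sO sK nsu hD.
set R := Cl A B u u; set S := Cl A B u s; set Y := R :|: S.
have ClO w x : x \in Cl A B u w -> [/\ x \in conj_class u, x \in SLn F n & x \in Kset A B].
  by rewrite inE => /and3P[h1 h2 _]; split => //; apply: O_SL h1.
have YO x : x \in Y -> [/\ x \in conj_class u, x \in SLn F n & x \in Kset A B].
  by rewrite inE => /orP[] /ClO.
have uR : u \in R by rewrite inE u_in_O uK rel_refl.
have sS : s \in S by rewrite inE sO sK rel_refl.
have uY : u \in Y by rewrite inE uR.
have clos w y x : y \in Y -> x \in Cl A B u w -> rop y x \in Cl A B u w.
  by move=> /YO[_ h1 h2] hx; apply: Cl_conj.
have subY w : Cl A B u w \subset conj_class u.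
  by apply/subsetP => x /ClO[].
have ractE w : ract Y (Cl A B u w) = Cl A B u w.
  apply/setP => x; apply/idP/idP.
    by case/imset2P => y r hy hr ->; apply: clos.
  move=> hx; apply/imset2P; exists u (rop (invmx u) x) => //.
    apply: Cl_conj => //; first by apply: SL_inv.
    exact: K_inv.
  rewrite /rop invmxK !mulmxA mulmxV ?(SL_unit hu) // mul1mx.
  by rewrite -mulmxA mulmxV ?(SL_unit hu) // mulmx1.
exists Y, R, S; split; last first.
  by exists u => //; exists s.
split.
  split; first by apply/subsetP => x /YO[].
  move=> y x hy; rewrite inE => /orP[] hx; rewrite inE.
    by rewrite (clos _ _ _ hy hx).
  by rewrite (clos _ _ _ hy hx) orbT.
split.
  split; first exact: subY.
  by move=> y x hy hx; apply: clos => //; rewrite inE hy.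
split.
  split; first exact: subY.
  by move=> y x hy hx; apply: clos => //; rewrite inE hy orbT.
split; first by apply/set0Pn; exists u.
split; first by apply/set0Pn; exists s.
split; first by [].
split.
  rewrite -setI_eq0; apply/eqP/setP => x; rewrite !inE.
  apply/negP => /andP[/and3P[_ _ h1] /and3P[_ _ h2]].
  by move/negP: nsu; apply; apply: rel_trans (rel_sym h2) h1.
by split; apply: ractE.
Qed.

Lemma two_neq0 (F : finFieldType) : odd #|F| -> (2%:R : F) != 0.
Proof.
move=> ho; apply/eqP => h2.
have hc : (#|F|%:R : F) = 0.
  have := @reindex_inj F +%R 0 F (fun x => 1 + x) xpredT (fun x => x) (addrI 1).
  rewrite big_split /= sumr_const => h.
  have := congr1 (fun v => v - \sum_(i : F) i) h; rewrite /= subrr addrK => ->.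
  by [].
move: hc; rewrite -[#|F|]odd_double_half ho -mul2n natrD natrM h2 mul0r addr0.
by move/eqP; rewrite oner_eq0.
Qed.

Definition fc (F : fieldType) n (c : 'cV[F]_n) (x : 'rV[F]_n) : F := (x *m c) 0 0.

Lemma fcD (F : fieldType) n (c : 'cV[F]_n) x y : fc c (x + y) = fc c x + fc c y.
Proof. by rewrite /fc mulmxDl mxE. Qed.
Lemma fcB (F : fieldType) n (c : 'cV[F]_n) x y : fc c (x - y) = fc c x - fc c y.
Proof. by rewrite /fc mulmxDl mulNmx !mxE. Qed.
Lemma fcZ (F : fieldType) n (c : 'cV[F]_n) a x : fc c (a *: x) = a * fc c x.
Proof. by rewrite /fc -scalemxAl !mxE. Qed.
Lemma fc_cB (F : fieldType) n (c c' : 'cV[F]_n) x : fc (c - c') x = fc c x - fc c' x.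
Proof. by rewrite /fc mulmxDr mulmxN !mxE. Qed.
Lemma fc_cZ (F : fieldType) n (c : 'cV[F]_n) a x : fc (a *: c) x = a * fc c x.
Proof. by rewrite /fc -scalemxAr !mxE. Qed.
Lemma fc_cM (F : fieldType) n (c : 'cV[F]_n) (M : 'M[F]_n) x : fc (M *m c) x = fc c (x *m M).
Proof. by rewrite /fc mulmxA. Qed.
Lemma rk1E (F : fieldType) n (x : 'rV[F]_n) (c : 'cV[F]_n) (d : 'rV[F]_n) :
  x *m (c *m d) = fc c x *: d.
Proof. exact: rv_rk1. Qed.

Lemma subB_sub (F : fieldType) m1 m2 n (X Y : 'M[F]_(m1, n)) (Z : 'M[F]_(m2, n)) :
  (X <= Z)%MS -> (Y <= Z)%MS -> (X - Y <= Z)%MS.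
Proof. by move=> h1 h2; apply: addmx_sub h1 _; rewrite -scaleN1r scalemx_sub. Qed.

Lemma main_constr (F : finFieldType) n (u : 'M[F]_n) (b : 'rV[F]_n) :
  (2%:R : F) != 0 -> u \in SLn F n ->
  ~~ (b *m (u - 1%:M) *m (u - 1%:M) <= (u - 1%:M) *m (u - 1%:M) *m (u - 1%:M))%MS ->
  type_D (conj_class u).
Proof.
move=> h2 hu.
set N := u - 1%:M; set N2 := N *m N; set N3 := N2 *m N.
set d1 := b *m N; set d2 := d1 *m N; set d3 := d2 *m N; set d4 := d3 *m N.
move=> hb.
have N3N x : (x <= N3)%MS -> (x *m N <= N3)%MS.
  move=> /submxP[y ->]; rewrite -mulmxA.
  have -> : N3 *m N = N *m N3 by rewrite /N3 /N2 !mulmxA.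
  by rewrite mulmxA submxMl.
have N2N3 x : (x <= N2)%MS -> (x *m N <= N3)%MS by move=> h; apply: submxMr.
have N2N : (N2 <= N)%MS by apply: submxMl.
have N3N2 : (N3 <= N2)%MS.
  have -> : N3 = N *m N2 by rewrite /N3 /N2 !mulmxA.
  exact: submxMl.
have d1N : (d1 <= N)%MS by apply: submxMl.
have d2N2 : (d2 <= N2)%MS by rewrite /d2 /d1 -mulmxA submxMl.
have d3N3 : (d3 <= N3)%MS by rewrite /d3 /d2 /d1 /N3 /N2 -!mulmxA submxMl.
have d4N3 : (d4 <= N3)%MS by apply: N3N.
have xN2 x : x *m N2 = x *m N *m N by rewrite mulmxA.
set K := cokermx N3.
have hb2 : d2 *m K != 0 by rewrite -submxE.
have NK : N3 *m K = 0 by apply: mulmx_coker.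
clearbody K.
have [j hj] : exists j, (d2 *m K) 0 j != 0.
  case: (pickP (fun j => (d2 *m K) 0 j != 0)) => [j hj | h0]; first by exists j.
  case/eqP: hb2; apply/matrixP => i k; rewrite (ord1 i) [RHS]mxE.
  by have := h0 k => /negbFE/eqP.
set a := (d2 *m K) 0 j.
set g := a^-1 *: col j K.
set f := fc g.
have f0 x : (x <= N3)%MS -> f x = 0.
  move=> /submxP[y ->]; rewrite /f /fc /g colE -!scalemxAr.
  have -> : y *m N3 *m (K *m (delta_mx j 0 : 'cV[F]_n)) = y *m (N3 *m K) *m (delta_mx j 0 : 'cV[F]_n).
    by rewrite !mulmxA.
  by rewrite NK mulmx0 mul0mx scaler0 mxE.
have fd2 : f d2 = 1.
  by rewrite /f /fc /g -scalemxAr colE mulmxA mxE -colE mxE mulVf.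

clearbody g.
set c1 := N *m g - f d1 *: (N2 *m g).
set c2 := g - f d1 *: c1 - f b *: (N2 *m g).
have g1E x : fc c1 x = f (x *m N) - f d1 * f (x *m N *m N).
  by rewrite /c1 fc_cB fc_cZ !fc_cM xN2.
clearbody c1.
have g2E x : fc c2 x = f x - f d1 * fc c1 x - f b * f (x *m N *m N).
  by rewrite /c2 !fc_cB !fc_cZ fc_cM xN2.
clearbody c2.
have g1x x : (x <= N2)%MS -> fc c1 x = 0.
  move=> h; rewrite g1E (f0 _ (N2N3 _ _ h)) (f0 _ (N3N _ _ (N2N3 _ _ h))).
  by rewrite mulr0 subr0.
have g1b : fc c1 b = 0 by rewrite g1E -/d1 -/d2 fd2 mulr1 subrr.
have g1d1 : fc c1 d1 = 1 by rewrite g1E -/d2 -/d3 fd2 (f0 _ d3N3) mulr0 subr0.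
have g2x x : (x <= N3)%MS -> fc c2 x = 0.
  move=> h; rewrite g2E (f0 _ h) g1x ?(submx_trans h N3N2) // (f0 _ (N3N _ _ (N3N _ _ h))).
  by rewrite !mulr0 !subr0.
have g2b : fc c2 b = 0 by rewrite g2E g1b -/d1 -/d2 fd2 mulr0 subr0 mulr1 subrr.
have g2d1 : fc c2 d1 = 0 by rewrite g2E g1d1 -/d2 -/d3 (f0 _ d3N3) mulr1 mulr0 subr0 subrr.
have g2d2 : fc c2 d2 = 1.
  by rewrite g2E fd2 (g1x _ d2N2) -/d3 -/d4 (f0 _ d4N3) !mulr0 !subr0.
set t := (1%:M + ((-2) *: c1) *m d1) *m (1%:M + ((-2) *: c2) *m d2).
have tE x : x *m t = x - (2 * fc c1 x) *: d1 - (2 * fc c2 x) *: d2.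
  rewrite /t mulmxA mulmxDr mulmx1 rk1E mulmxDr mulmx1 rk1E !fc_cZ fcD fcZ g2d1.
  by apply/rowP => k; rewrite !mxE; ring.
have ttE (x : 'rV[F]_n) : x *m t *m t = x.
  rewrite tE (tE x) !fcB !fcZ g1d1 g2d1 g2d2 (g1x _ d2N2).
  by apply/rowP => k; rewrite !mxE; ring.
have tt1 : t *m t = 1%:M.
  apply/row_matrixP => i; rewrite row_mul -{1}[t]mul1mx row_mul ttE.
  by [].
have ut : t \in unitmx by case: (mulmx1_unit tt1).
have it : invmx t = t by rewrite -[invmx t]mulmx1 -tt1 mulmxA mulVmx // mul1mx.
have tSL : t \in SLn F n.
  have e1 : fc ((-2) *: c1) d1 = -2 by rewrite fc_cZ g1d1 mulr1.
  have e2 : fc ((-2) *: c2) d2 = -2 by rewrite fc_cZ g2d2 mulr1.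
  rewrite /fc in e1 e2.
  rewrite inE /t det_mulmx !det_rank1 e1 e2; apply/eqP; ring.
have presN : pres N N2 t.
  rewrite /pres; apply/andP; split; apply/row_subP => i; rewrite row_mul tE.
    apply: subB_sub; first apply: subB_sub; first exact: row_sub.
      exact: scalemx_sub.
    exact: scalemx_sub (submx_trans d2N2 N2N).
  rewrite (g1x _ (row_sub i N2)) mulr0 scale0r subr0.
  apply: subB_sub; first exact: row_sub.
  exact: scalemx_sub.
have uE : u = 1%:M + N by rewrite /N addrC subrK.
have uunit := SL_unit hu.
have NuC : N *m u = u *m N by rewrite uE mulmxDl mulmxDr mulmx1 mul1mx.
have NiC : N *m invmx u = invmx u *m N.
  by rewrite -{1}(mulKmx uunit N) -NuC !mulmxA mulmxK.
have uK : u \in Kset N N2.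
  rewrite inE uunit /=; apply/andP; split.
    rewrite /Kp -/N submx_refl /= -/N2 submx_refl /=.
    by rewrite uE mulmxDr mulmx1 addmx_sub.
  have iuE : invmx u - 1%:M = - (invmx u *m N).
    by rewrite /N mulmxBr mulmx1 mulVmx // opprB.
  rewrite /Kp iuE; apply/and3P; split.
  - by rewrite -scaleN1r scalemx_sub // submxMl.
  - by rewrite mulmxN -scaleN1r scalemx_sub // mulmxA NiC -mulmxA submxMl.
  - by rewrite /N2 -mulmxA NiC mulmxA NiC -mulmxA submxMl.
set s := t *m u *m invmx t.
have sO : s \in conj_class u by apply: O_conj tSL (u_in_O u).
have sK : s \in Kset N N2 by apply: K_conj => //; rewrite it.
have xs (x : 'rV[F]_n) : x *m s = x *m t *m u *m t by rewrite /s it !mulmxA.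
have xu (x : 'rV[F]_n) : x *m u = x + x *m N by rewrite {1}uE mulmxDr mulmx1.
have bt : b *m t = b by rewrite tE g1b g2b !mulr0 !scale0r !subr0.
have d1t : d1 *m t = - d1.
  rewrite tE g1d1 g2d1 mulr0 scale0r subr0 mulr1.
  by apply/rowP => k; rewrite !mxE; ring.
have d2t : d2 *m t = - d2.
  rewrite tE (g1x _ d2N2) g2d2 mulr0 scale0r subr0 mulr1.
  by apply/rowP => k; rewrite !mxE; ring.
have N3t (x : 'rV[F]_n) : (x <= N3)%MS -> x *m t = x.
  move=> h; rewrite tE (g1x _ (submx_trans h N3N2)) (g2x _ h).
  by rewrite !mulr0 !scale0r !subr0.
have bu : b *m u = b + d1 by rewrite xu.
have d1u : d1 *m u = d1 + d2 by rewrite xu.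
have d2u : d2 *m u = d2 + d3 by rewrite xu.
have d3u : d3 *m u = d3 + d4 by rewrite xu.
have bs : b *m s = b - d1 by rewrite xs bt bu mulmxDl bt d1t.
have d1s : d1 *m s = d1 + d2.
  by rewrite xs d1t mulNmx d1u mulNmx mulmxDl d1t d2t opprD !opprK.
have d2s : d2 *m s = d2 - d3.
  by rewrite xs d2t mulNmx d2u mulNmx mulmxDl d2t (N3t _ d3N3) opprD opprK.
have d3s : d3 *m s = d3 + d4.
  by rewrite xs (N3t _ d3N3) d3u mulmxDl (N3t _ d3N3) (N3t _ d4N3).
have m2 : (-2 : F) != 0 by rewrite oppr_eq0.
have nrel : ~~ rel N2 s u.
  apply/negP => h.
  have h' : (b *m (s - u) <= N2)%MS := submx_trans (submxMl b _) h.
  rewrite mulmxBr bs bu in h'.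
  have e : b - d1 - (b + d1) = (-2) *: d1 by apply/rowP => k; rewrite !mxE; ring.
  rewrite e in h'.
  have hd1 : (d1 <= N2)%MS.
    by rewrite -[d1]scale1r -(mulVf m2) -scalerA scalemx_sub.
  by move/negP: hb; apply; apply: submxMr.
have sunit : s \in unitmx by move: sK; rewrite inE => /and3P[].
clearbody s d4 d3 d2 d1.
have hD : rop u (rop s (rop u s)) != s.
  apply/eqP => E.
  have E2 : u *m s *m u *m s = s *m u *m s *m u.
    have := congr1 (fun M => M *m u *m s *m u) E; rewrite /rop /= !mulmxA.
    by rewrite (mulmxKV uunit) (mulmxKV sunit) (mulmxKV uunit).
  have := congr1 (mulmx b) E2; rewrite !mulmxA.
  rewrite !(mulmxDl, mulNmx, bu, d1u, d2u, d3u, bs, d1s, d2s, d3s) => Hv.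
  have h4 : (4%:R : F) *: d2 = 0.
    apply/rowP => k; move/rowP: Hv => /(_ k); rewrite !mxE => Hk.
    by move/eqP: Hk; rewrite -subr_eq0 => /eqP <-; ring.
  have h4n : (4%:R : F) != 0.
    by rewrite (_ : 4%:R = 2%:R * 2%:R) ?mulf_neq0 // -natrM.
  move/eqP: h4; rewrite scaler_eq0 (negbTE h4n) /= => /eqP hd2.
  by move: hb; rewrite hd2 sub0mx.
exact: (typeD_crit N2N hu uK sO sK nrel hD).
Qed.

Theorem mainTheorem9 (F : finFieldType) (n : nat) (u : 'M[F]_n) :
  odd #|F| -> (2 <= n)%N ->
  u \in SLn F n -> unipotent u -> (2 < lambda1 u)%N ->
  type_D (conj_class u).
Proof.
move=> ho hn hu hunip hl.
have h2 := two_neq0 ho.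
set N := u - 1%:M.
have N2n0 : N *m N != 0.
  have := before_find 0 hl; rewrite nth_iota // add0n expr2 -mulmxE => ->.
  by [].
have nsub : ~~ (N *m N <= N *m N *m N)%MS.
  apply/negP => hs.
  have hk k : (N *m N <= N ^+ k.+2)%MS.
    elim: k => [|k IH]; first by rewrite expr2 -mulmxE.
    by rewrite exprSr -mulmxE (submx_trans hs) // submxMr.
  move: (hk (n - 2)%N); rewrite -addn2 subnK // (eqP hunip) submx0.
  by rewrite (negbTE N2n0).
have [i hi] : exists i, ~~ (row i (N *m N) <= N *m N *m N)%MS.
  case: (pickP (fun i => ~~ (row i (N *m N) <= N *m N *m N)%MS)) => [i hi | h0].
    by exists i.
  by case/negP: nsub; apply/row_subP => i; move: (h0 i) => /negbFE.
apply: (main_constr (b := row i 1%:M) h2 hu).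
by rewrite -!row_mul mul1mx.
Qed.
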